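(* Let $k\geq 2$ be an even integer and let $G$ be an undirected graph whose degeneracy is $k$. Then $f(G)<\frac{k}{k+2}\,n(G)$.
   Context: All graphs are finite and simple. $n(G)$ is the number of vertices and $f(G)$ is the minimum size of a feedback vertex set of $G$ (a set $F\subseteq V(G)$ with $G-F$ acyclic). An ordering $\phi$ of $V(G)$ is a $k$-elimination ordering if each vertex has at most $k$ neighbours preceding it in $\phi$; the degeneracy of $G$ is the least $k$ such that $G$ has a $k$-elimination ordering. *)

(* Defs.v *)
From mathcomp Require Import all_boot.
Set Implicit Arguments. Unset Strict Implicit. Unset Printing Implicit Defensive.

Definition simple_graph (T : finType) (e : rel T) : Prop :=
  symmetric e /\ irreflexive e.

Definition is_cycle (T : finType) (e : rel T) (c : seq T) : bool :=
  [&& 3 <= size c, uniq c & cycle e c].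

Definition is_fvs (T : finType) (e : rel T) (F : {set T}) : Prop :=
  forall c : seq T, is_cycle e c -> has (fun x => x \in F) c.

Definition elim_ordering (T : finType) (e : rel T) (k : nat) (phi : seq T) : Prop :=
  [/\ uniq phi, (forall x : T, x \in phi) &
      forall (s t : seq T) (x : T), phi = s ++ x :: t -> count (e x) s <= k].

Definition degeneracy_eq (T : finType) (e : rel T) (k : nat) : Prop :=
  (exists phi, elim_ordering e k phi) /\
  (forall j phi, elim_ordering e j phi -> k <= j).

Definition fvs_number_eq (T : finType) (e : rel T) (m : nat) : Prop :=
  (exists F : {set T}, is_fvs e F /\ #|F| = m) /\
  (forall F : {set T}, is_fvs e F -> m <= #|F|).

(* Main.v *)
Require Import Defs.
From mathcomp Require Import zify.
From mathcomp Require Import all_boot.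
Set Implicit Arguments. Unset Strict Implicit. Unset Printing Implicit Defensive.

Lemma idx_inj (T : eqType) (phi : seq T) x y :
  x \in phi -> y \in phi -> index x phi = index y phi -> x = y.
Proof.
move=> hx hy hi; by rewrite -(nth_index x hx) hi (nth_index x hy).
Qed.

Lemma forest (T : finType) (e : rel T) (phi : seq T) (A : {set T}) :
  symmetric e -> (forall x, x \in phi) ->
  (forall x, x \in A -> #|[set y in A | e x y && (index y phi < index x phi)]| <= 1) ->
  is_fvs e (~: A).
Proof.
move=> hsym allphi HA c /and3P[c3 cu cc].
apply/negPn/negP => /hasPn Hno.
have allA : forall y, y \in c -> y \in A.
  by move=> y /Hno; rewrite in_setC negbK.
case: c c3 cu cc Hno allA => [//|x0 c1] c3 cu cc _ allA.
have x0c : x0 \in x0 :: c1 by rewrite mem_head.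
case: (arg_maxnP (fun y => index y phi) x0c) => x xc xmax.
have := rot_index xc.
set p := drop _ _ ++ take _ _ => hrot.
have hsz : size (x :: p) = size (x0 :: c1) by rewrite -hrot size_rot.
have hu : uniq (x :: p) by rewrite -hrot rot_uniq.
have hc : cycle e (x :: p) by rewrite -hrot rot_cycle.
have hmem : forall y, y \in x :: p -> y \in x0 :: c1 by move=> y; rewrite -hrot mem_rot.
clear hrot; move: p hsz hu hc hmem => [|y q] //=; first by move=> h; move: c3; rewrite /= -h.
case/lastP: q => [|q' z]; first by move=> h; move: c3; rewrite /= -h.
move=> _ hu hc hmem.
rewrite rcons_path last_rcons in hc.
case/and3P: hc => exy _ ezx.
move: hu => /andP[]; rewrite !inE negb_or => /andP[nxy nxq] /andP[nyq _].
have zq : z \in rcons q' z by rewrite mem_rcons mem_head.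
have nyz : y != z by apply/eqP => eyz; rewrite eyz zq in nyq.
have nxz : x != z by apply/eqP => exz; rewrite exz zq in nxq.
have yc : y \in x0 :: c1 by apply: hmem; rewrite !inE eqxx orbT.
have zc : z \in x0 :: c1 by apply: hmem; rewrite !inE zq !orbT.
have lt_of : forall w, w \in x0 :: c1 -> x != w -> index w phi < index x phi.
  move=> w wc nxw; rewrite ltn_neqAle (xmax w wc : index w phi <= index x phi) andbT.
  apply/eqP => h; move/eqP: nxw; apply; exact (idx_inj (allphi x) (allphi w) (esym h)).
have := HA x (allA x xc).
apply/negP; rewrite -ltnNge.
apply: (@leq_trans #|[set y; z]|); first by rewrite cards2 nyz.
apply/subset_leq_card/subsetP => w; rewrite !inE => /orP[]/eqP->.
- by rewrite allA // exy lt_of.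
- by rewrite allA // hsym ezx lt_of.
Qed.

Lemma card_addI (T : finType) (x : T) (A S : {set T}) :
  x \notin A -> #|(x |: A) :&: S| = (x \in S) + #|A :&: S|.
Proof.
move=> xnA; rewrite (cardsD1 x) !inE eqxx /=; congr (_ + _).
apply: eq_card => y; rewrite !inE.
case: (y =P x) => [->|_] /=; first by rewrite (negbTE xnA).
by [].
Qed.

Lemma card_IDx (T : finType) (x : T) (A S : {set T}) :
  x \notin A -> #|A :&: S| = #|A :&: (S :\ x)|.
Proof.
move=> xnA; apply: eq_card => y; rewrite !inE.
by case: (y =P x) => [->|_] /=; rewrite ?(negbTE xnA).
Qed.

Lemma build (T : finType) (e : rel T) (k c' : nat) (phi : seq T) (x0 : T) :
  uniq phi -> k.+1 < c'.+2 * 2 ->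
  (forall x, #|[set y | e x y && (index y phi < index x phi)]| <= k) ->
  forall p, p <= size phi -> exists A : nat -> {set T},
   [/\ forall j y, y \in A j -> index y phi < p,
       forall S : {set T}, \sum_(j < c'.+2) #|A j :&: S| <= #|S| + 1,
       forall j x, x \in A j -> #|[set y in A j | e x y && (index y phi < index x phi)]| <= 1
     & 0 < p -> p < \sum_(j < c'.+2) #|A j|].
Proof.
move=> uphi hc hB; elim => [_|p IH hp].
  exists (fun _ => set0); split => //.
  - by move=> j y; rewrite inE.
  - by move=> S; rewrite big1 // => j _; rewrite set0I cards0.
  - by move=> j y; rewrite inE.
have [A [A1 A2 A3 A4]] := IH (ltnW hp).
pose x := nth x0 phi p.
have ix : index x phi = p := index_uniq x0 hp uphi.
have xnA : forall j, x \notin A j by move=> j; apply/negP => /A1; rewrite ix ltnn.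
case: (posnP p) => [p0|ppos].
  exists (fun j => if j < 2 then [set x] else set0); split.
  - move=> j y; case: ifP => _; rewrite inE // => /eqP ->; by rewrite ix p0.
  - move=> S; rewrite !big_ord_recl /= big1; last by move=> j _; rewrite set0I cards0.
    have -> : #|[set x] :&: S| = (x \in S).
      by rewrite -(setU0 [set x]) card_addI ?inE // set0I cards0 addn0.
    by rewrite (cardsD1 x S); case: (x \in S) => /=; rewrite ?addn0 ?add0n // addnC.
  - move=> j y hy; apply: leq_trans (_ : #|if j < 2 then [set x] else set0| <= 1).
      by apply/subset_leq_card/subsetP => z; rewrite inE => /andP[].
    by case: ifP; rewrite ?cards1 ?cards0.
  - by move=> _; rewrite !big_ord_recl /= cards1 p0.
pose B := [set y | e x y && (index y phi < index x phi)].
case: (pickP (fun j : 'I_c'.+2 => #|A j :&: B| <= 1)) => [j0 hj0 | hnone]; last first.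
  exfalso; have := A2 B.
  have : \sum_(j < c'.+2) 2 <= \sum_(j < c'.+2) #|A j :&: B|.
    by apply: leq_sum => j _; have := hnone j; rewrite /= => /negbT; rewrite -ltnNge.
  rewrite sum_nat_const card_ord => h1 h2.
  have := hB x; rewrite -/B => h3.
  have := leq_trans h1 h2; move: hc h3; clear; lia.
pose A' := fun j : nat => if j == j0 then x |: A j else A j.
have hsum : forall S, \sum_(j < c'.+2) #|A' j :&: S| = \sum_(j < c'.+2) #|A j :&: S| + (x \in S).
  move=> S; rewrite (bigD1 j0) //= [in RHS](bigD1 j0) //=.
  have -> : \sum_(j < c'.+2 | j != j0) #|A' j :&: S| = \sum_(j < c'.+2 | j != j0) #|A j :&: S|.
    by apply: eq_bigr => j hj; rewrite /A'; have -> : (nat_of_ord j == nat_of_ord j0) = false by apply: negbTE.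
  by rewrite /A' eqxx card_addI // -addnA addnC.
exists A'; split.
- move=> j y; rewrite /A'; case: ifP => _; last by move/A1/leqW.
  by rewrite !inE => /orP[/eqP->|/A1/leqW //]; rewrite ix.
- move=> S; rewrite hsum.
  rewrite (eq_bigr (fun j : 'I_c'.+2 => #|A j :&: (S :\ x)|)); last by move=> j _; apply: card_IDx.
  have := A2 (S :\ x); rewrite (cardsD1 x S); case: (x \in S) => /=; lia.
- move=> j y; rewrite /A'; case: ifP => [/eqP ej|_]; last exact: A3.
  rewrite ej.
  rewrite !inE => /orP[/eqP->|hy].
    apply: leq_trans hj0; apply/subset_leq_card/subsetP => z.
    rewrite !inE => /andP[/orP[/eqP->|zA]]; first by rewrite ltnn andbF.
    by move=> ->; rewrite zA.
  apply: leq_trans (A3 _ _ hy); apply/subset_leq_card/subsetP => z.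
  rewrite !inE => /andP[/orP[/eqP->|zA]]; last by move=> ->; rewrite zA.
  by rewrite ix => /andP[_ /(ltn_trans (A1 _ _ hy))]; rewrite ltnn.
- move=> _; have h := hsum setT.
  have e1 : forall (F : nat -> {set T}), \sum_(j < c'.+2) #|F j :&: setT| = \sum_(j < c'.+2) #|F j|.
    by move=> F; apply: eq_bigr => j _; rewrite setIT.
  rewrite !e1 inE addn1 in h; rewrite h ltnS; exact: A4.
Qed.

Theorem mainTheorem2 (T : finType) (e : rel T) (k : nat) :
  simple_graph e -> 2 <= k -> ~~ odd k -> degeneracy_eq e k ->
  forall m : nat, fvs_number_eq e m -> m * (k + 2) < k * #|T|.
Proof.
move=> [hsym _] k2 kev [[phi [uphi allphi hcount]] hmin] m [_ Fmin].
have sz : #|T| = size phi.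
  rewrite -(card_uniqP uphi); apply: eq_card => x; by rewrite allphi.
case E: phi => [|x0 phi'].
  have : elim_ordering e 0 phi by split => // s t x; rewrite E; case: s.
  by move/hmin; move: k2; clear; lia.
have hB : forall x, #|[set y | e x y && (index y phi < index x phi)]| <= k.
  move=> x; set i := index x phi.
  have hi : i < size phi by rewrite index_mem.
  have hd := drop_nth x hi; rewrite nth_index // in hd.
  have hE : phi = take i phi ++ x :: drop i.+1 phi by rewrite -hd cat_take_drop.
  have := hcount _ _ _ hE; apply: leq_trans.
  apply: leq_trans (_ : #|filter (e x) (take i phi)| <= _); last by rewrite -size_filter card_size.
  apply/subset_leq_card/subsetP => y; rewrite !inE mem_filter in_take //.
have hk : k = (k./2).*2 by rewrite -[LHS]odd_double_half (negbTE kev).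
set c' := k./2 - 1.
have hc'k : k = c'.+2 * 2 - 2 by rewrite /c'; lia.
have hc : k.+1 < c'.+2 * 2 by lia.
have [A [A1 A2 A3 A4]] := build x0 uphi hc hB (leqnn (size phi)).
have A4' := A4 (ltac:(by rewrite E)).
case: (pickP (fun j : 'I_c'.+2 => #|T| < #|A j| * c'.+2)) => [j hj | hnone]; last first.
  exfalso.
  have : \sum_(j < c'.+2) #|A j| * c'.+2 <= \sum_(j < c'.+2) #|T|.
    by apply: leq_sum => j _; have := hnone j; rewrite /= => /negbT; rewrite -leqNgt.
  rewrite -big_distrl /= sum_nat_const card_ord => h.
  have h2 := leq_trans (leq_mul A4' (leqnn c'.+2)) h; rewrite sz in h2.
  move: h2; clear; nia.
have fv := forest hsym allphi (A3 j).
have := Fmin _ fv; rewrite cardsCs setCK => hm.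
have ha : #|A j| <= #|T| by apply: max_card.
move: hm hj ha; rewrite hc'k; clear; nia.
Qed.
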